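(* For every $n\ge 2$ there is a finite poset $P$ excluding $\mathbf{3}+\mathbf{3}$ such that $\dim(P)\ge n$ and every convex subposet $Q$ of $P$ satisfies $\dim(Q)\le h(Q)+1$, where $h(Q)$ denotes the height of $Q$.
   Context: $\mathbf{3}+\mathbf{3}$ is the disjoint union of two $3$-element chains with all points of one incomparable to all points of the other; $P$ excludes it if no subposet is isomorphic to it. A subposet $Q$ is convex if $x,z\in Q$ and $x<y<z$ imply $y\in Q$. $\dim$ denotes the Dushnik–Miller dimension. *)

(* Defs.v *)
From mathcomp Require Import all_boot.
Set Implicit Arguments. Unset Strict Implicit. Unset Printing Implicit Defensive.

Definition is_poset (T : finType) (le : rel T) : Prop :=
  [/\ reflexive le, antisymmetric le & transitive le].

Definition le33 : rel (bool * 'I_3) :=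
  fun u v => (u.1 == v.1) && (u.2 <= v.2)%N.

Definition excludes_3_3 (T : finType) (le : rel T) : Prop :=
  ~ exists f : bool * 'I_3 -> T,
      injective f /\ forall u v, le (f u) (f v) = le33 u v.

Definition convex (T : finType) (le : rel T) (Q : {set T}) : Prop :=
  forall x y z, x \in Q -> z \in Q -> le x y -> le y z -> y \in Q.

Definition linear_ext (T : finType) (le : rel T) (Q : {set T}) (L : rel T) : Prop :=
  [/\ {in Q, reflexive L},
      {in Q &, antisymmetric L},
      {in Q & &, transitive L},
      {in Q &, total L} &
      {in Q &, forall x y, le x y -> L x y}].

Definition realizer (T : finType) (le : rel T) (Q : {set T}) (d : nat)
  (L : 'I_d -> rel T) : Prop :=
  (forall i, linear_ext le Q (L i)) /\
  {in Q &, forall x y, le x y <-> (forall i, L i x y)}.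

Definition dim_le (T : finType) (le : rel T) (Q : {set T}) (d : nat) : Prop :=
  exists L : 'I_d -> rel T, realizer le Q L.

Definition chain (T : finType) (le : rel T) (C : {set T}) : bool :=
  [forall x in C, forall y in C, le x y || le y x].

Definition height (T : finType) (le : rel T) (Q : {set T}) : nat :=
  \max_(C : {set T} | (C \subset Q) && chain le C) #|C|.

(* Main.v *)
Require Import Defs.
From mathcomp Require Import all_boot zify.
Set Implicit Arguments. Unset Strict Implicit. Unset Printing Implicit Defensive.

Definition TT (m : nat) : finType := ('I_3 * 'I_m.+2)%type.
Definition tg m (x : TT m) : nat := x.1.
Definition idx m (x : TT m) : nat := x.2.
Lemma tgP m (x : TT m) : tg x < 3. Proof. exact: ltn_ord. Qed.
Lemma idxP m (x : TT m) : idx x < m.+2. Proof. exact: ltn_ord. Qed.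
Lemma eqTT m (x y : TT m) : tg x = tg y -> idx x = idx y -> x = y.
Proof. case: x y => [i j] [k l] /= H1 H2; congr pair; exact: val_inj. Qed.

Definition mk m (g i : nat) : TT m := (inord g, inord i).
Lemma tg_mk m g i : g < 3 -> tg (mk m g i) = g.
Proof. by move=> h; rewrite /tg /= inordK. Qed.
Lemma idx_mk m g i : i < m.+2 -> idx (mk m g i) = i.
Proof. by move=> h; rewrite /idx /= inordK. Qed.

Definition lep m : rel (TT m) := fun x y =>
  if tg x == 0 then (if tg y == 0 then idx x == idx y else if tg y == 1 then idx x <= idx y else idx x != idx y)
  else if tg x == 1 then (if tg y == 0 then false else if tg y == 1 then idx x <= idx y else idx x < idx y)
  else (tg y == 2) && (idx x == idx y).

Ltac gen x := have := tgP x; have := idxP x; move: (tg x) (idx x) => ? ? ? ?.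
Ltac crush := repeat (case: ifP => ? /=); lia.

Lemma poset m : is_poset (@lep m).
Proof.
split.
- move=> x; rewrite /lep; gen x; crush.
- move=> x y H; apply: eqTT; move: H; rewrite /lep; gen x; gen y; crush.
- move=> y x z; rewrite /lep; gen x; gen y; gen z; crush.
Qed.

Definition r1 m (x : TT m) : nat := if tg x == 0 then 2 * idx x else if tg x == 1 then (2 * idx x).+1 else 3 * m.+2 - idx x.
Definition r2 m (x : TT m) : nat := if tg x == 0 then m.+2 - idx x else if tg x == 1 then m.+2 + 2 + 2 * idx x else m.+2 + 1 + 2 * idx x.
Definition rx m t (x : TT m) : nat :=
  if tg x == 0 then (if idx x == t then m.+2 + t + 1 else idx x)
  else if tg x == 1 then (if idx x < t then m.+2 + idx x else m.+2 + idx x + 2)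
  else (if idx x == t then m.+2 + t else 2 * m.+2 + 2 + idx x).
Definition rk m (c : nat) (x : TT m) : nat := if c == 0 then r1 x else if c == 1 then r2 x else rx (c - 2) x.

Lemma rk_inj m c : injective (@rk m c).
Proof. move=> x y H; apply: eqTT; move: H; rewrite /rk /r1 /r2 /rx; gen x; gen y; crush. Qed.
Lemma rk_mono m c (x y : TT m) : lep x y -> rk c x <= rk c y.
Proof. rewrite /lep /rk /r1 /r2 /rx; gen x; gen y; crush. Qed.
Lemma cover12 m (x y : TT m) : ~~ lep x y -> ~~ [&& tg x == 0, tg y == 2 & idx x == idx y] ->
  (rk 0 y < rk 0 x) || (rk 1 y < rk 1 x).
Proof. rewrite /lep /rk /= /r1 /r2; gen x; gen y; crush. Qed.
Lemma coverx m (x y : TT m) : tg x = 0 -> tg y = 2 -> idx x = idx y -> rk (idx x).+2 y < rk (idx x).+2 x.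
Proof. rewrite /rk /r1 /r2 /rx; gen x; gen y; crush. Qed.

Lemma realizer_of m (Q : {set TT m}) d (c : 'I_d -> nat) :
  (forall x y, x \in Q -> y \in Q -> ~~ lep x y -> exists i, rk (c i) y < rk (c i) x) ->
  dim_le (@lep m) Q d.
Proof.
move=> H; exists (fun i x y => rk (c i) x <= rk (c i) y); split.
  move=> i; split.
  - by move=> x _.
  - move=> x y _ _ /andP [h1 h2]; apply: (@rk_inj m (c i)); apply/eqP; by rewrite eqn_leq h1 h2.
  - move=> y x z _ _ _ h1 h2; exact: leq_trans h1 h2.
  - by move=> x y _ _; apply: leq_total.
  - by move=> x y _ _; apply: rk_mono.
move=> x y xQ yQ; split; first by move=> h i; apply: rk_mono.
move=> h; case E: (lep x y) => //; have [i hi] := H x y xQ yQ (negbT E).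
by move: (h i); rewrite leqNgt hi.
Qed.

Lemma lep_ab m s t : s < m.+2 -> t < m.+2 -> @lep m (mk m 0 s) (mk m 2 t) = (s != t).
Proof. by move=> hs ht; rewrite /lep !tg_mk // !idx_mk. Qed.

Lemma dim_lb m d : dim_le (@lep m) [set: TT m] d -> m.+2 <= d.
Proof.
move=> [L [HL HR]].
have H : forall t : 'I_m.+2, exists i, ~~ L i (mk m 0 t) (mk m 2 t).
  move=> t; apply/existsP; rewrite -negb_forall; apply/negP => /forallP h.
  have := (proj2 (HR _ _ (in_setT _) (in_setT _))) h.
  by rewrite lep_ab // eqxx.
have [i0 _] := H ord0.
pose g (t : 'I_m.+2) := odflt i0 [pick i | ~~ L i (mk m 0 t) (mk m 2 t)].
have gP (t : 'I_m.+2) : ~~ L (g t) (mk m 0 t) (mk m 2 t).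
  rewrite /g; case: pickP => [i hi|h] //=; have [i hi] := H t; by rewrite h in hi.
have ginj : injective g.
  move=> s t e; apply/eqP; apply/negPn/negP => ne.
  have hs := gP s; have ht := gP t; rewrite e in hs.
  have [_ _ tr tot _] := HL (g t).
  have l1 : L (g t) (mk m 2 s) (mk m 0 s).
    by move: (tot _ _ (in_setT (mk m 0 s)) (in_setT (mk m 2 s))); rewrite (negbTE hs).
  have l2 : L (g t) (mk m 0 s) (mk m 2 t).
    by apply: (proj1 (HR _ _ (in_setT _) (in_setT _))); rewrite lep_ab.
  have l3 : L (g t) (mk m 0 t) (mk m 2 s).
    by apply: (proj1 (HR _ _ (in_setT _) (in_setT _))); rewrite lep_ab // eq_sym.
  have l4 := tr _ _ _ (in_setT _) (in_setT _) (in_setT _) l3 l1.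
  have l5 := tr _ _ _ (in_setT _) (in_setT _) (in_setT _) l4 l2.
  by rewrite l5 in ht.
by have := leq_card g ginj; rewrite !card_ord.
Qed.

Lemma mid m (x y w : TT m) : x != y -> y != w -> lep x y -> lep y w -> tg y = 1.
Proof.
move=> h1 h2; have h1' : (tg x != tg y) || (idx x != idx y).
  by case: eqVneq => a //=; case: eqVneq => b //=; rewrite (eqTT a b) eqxx in h1.
have h2' : (tg y != tg w) || (idx y != idx w).
  by case: eqVneq => a //=; case: eqVneq => b //=; rewrite (eqTT a b) eqxx in h2.
move: h1' h2'; rewrite /lep; gen x; gen y; gen w; crush.
Qed.

Lemma mid_comp m (y w : TT m) : tg y = 1 -> tg w = 1 -> lep y w || lep w y.
Proof. rewrite /lep; gen y; gen w; crush. Qed.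

Lemma excl m : excludes_3_3 (@lep m).
Proof.
move=> [f [fi fe]].
pose o0 := @Ordinal 3 0 isT; pose o1 := @Ordinal 3 1 isT; pose o2 := @Ordinal 3 2 isT.
have ne u v : u != v -> f u != f v by move=> h; apply: contra h => /eqP /fi ->.
have m1 : tg (f (true, o1)) = 1.
  by apply: (@mid m (f (true,o0)) _ (f (true,o2))); rewrite ?fe ?ne.
have m2 : tg (f (false, o1)) = 1.
  by apply: (@mid m (f (false,o0)) _ (f (false,o2))); rewrite ?fe ?ne.
by have := mid_comp m1 m2; rewrite !fe.
Qed.

Lemma lep_refl m (x : TT m) : lep x x.
Proof. by have [r _ _] := poset m; apply: r. Qed.

Lemma height_ge m (Q C : {set TT m}) : C \subset Q -> chain (@lep m) C -> #|C| <= height (@lep m) Q.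
Proof. by move=> h1 h2; apply: (leq_bigmax_cond (F := fun C : {set TT m} => #|C|)); rewrite h1 h2. Qed.

Lemma height1 m (Q : {set TT m}) x : x \in Q -> 1 <= height (@lep m) Q.
Proof.
move=> xQ; rewrite -(cards1 x); apply: height_ge; first by rewrite sub1set.
by apply/forallP => u; apply/implyP; rewrite in_set1 => /eqP ->; apply/forallP => v; apply/implyP;
  rewrite in_set1 => /eqP ->; rewrite lep_refl.
Qed.

Lemma height2 m (Q : {set TT m}) x y : x \in Q -> y \in Q -> x != y -> lep x y -> 2 <= height (@lep m) Q.
Proof.
move=> xQ yQ ne l; have := cards2 x y; rewrite ne => <-; apply: height_ge.
  by apply/subsetP => u; rewrite !inE => /orP [] /eqP ->.
apply/forallP => u; apply/implyP; rewrite !inE => hu; apply/forallP => v; apply/implyP; rewrite !inE => hv.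
by case/orP: hu => /eqP ->; case/orP: hv => /eqP ->; rewrite ?lep_refl ?l ?orbT.
Qed.

Definition fn m (p t j : nat) : TT m :=
  mk m (if j == 0 then 0 else if j == t - p + 1 then 2 else 1)
       (if j == 0 then p else if j == t - p + 1 then t else p + j - 1).

Lemma tg_fn m p t j : tg (fn m p t j) = (if j == 0 then 0 else if j == t - p + 1 then 2 else 1).
Proof. by rewrite tg_mk //; case: ifP => //; case: ifP. Qed.

Lemma idx_fn m p t j : p < t -> t < m.+2 -> j < t - p + 2 ->
  idx (fn m p t j) = (if j == 0 then p else if j == t - p + 1 then t else p + j - 1).
Proof. move=> h1 h2 h3; rewrite idx_mk //; case: ifP => ?; [lia|]; case: ifP => ?; lia. Qed.

Lemma chain_len m (Q : {set TT m}) p t : convex (@lep m) Q -> p < t -> t < m.+2 ->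
  mk m 0 p \in Q -> mk m 2 t \in Q -> t - p + 2 <= height (@lep m) Q.
Proof.
move=> HQ pt tN aQ bQ.
pose f (j : 'I_(t - p + 2)) := fn m p t j.
have finj : injective f.
  move=> j j' e; apply/val_inj => /=.
  have e1 := congr1 (@tg m) e; have e2 := congr1 (@idx m) e.
  move: e1 e2; rewrite /f !tg_fn !idx_fn //; have := ltn_ord j; have := ltn_ord j'.
  move: (nat_of_ord j) (nat_of_ord j') => a b; case: (boolP (a == 0)) => ?; case: (boolP (a == t - p + 1)) => ?; case: (boolP (b == 0)) => ?; case: (boolP (b == t - p + 1)) => ? /=; crush.
have := card_imset [set: 'I_(t - p + 2)] finj; rewrite cardsT card_ord => <-.
apply: height_ge.
  apply/subsetP => u /imsetP [j _ ->]; apply: (HQ (mk m 0 p) _ (mk m 2 t)) => //.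
    rewrite /lep /f tg_fn idx_fn // !tg_mk // !idx_mk //; try lia.
    have := ltn_ord j; move: (nat_of_ord j) => a; case: (boolP (a == 0)) => ?; case: (boolP (a == t - p + 1)) => ? /=; crush.
  rewrite /lep /f tg_fn idx_fn // !tg_mk // !idx_mk //; try lia.
  have := ltn_ord j; move: (nat_of_ord j) => a; case: (boolP (a == 0)) => ?; case: (boolP (a == t - p + 1)) => ? /=; crush.
apply/forallP => u; apply/implyP => /imsetP [j _ ->]; apply/forallP => v; apply/implyP => /imsetP [j' _ ->].
rewrite /lep /f !tg_fn !idx_fn //; have := ltn_ord j; have := ltn_ord j'.
move: (nat_of_ord j) (nat_of_ord j') => a b; case: (boolP (a == 0)) => ?; case: (boolP (a == t - p + 1)) => ?; case: (boolP (b == 0)) => ?; case: (boolP (b == t - p + 1)) => ? /=; crush.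
Qed.

Lemma comp_ab m p (x : TT m) : p < m.+2 -> lep (mk m 0 p) x || lep x (mk m 2 p).
Proof. move=> pN; rewrite /lep !tg_mk // !idx_mk //; gen x; crush. Qed.

Lemma conv_dim m (Q : {set TT m}) : convex (@lep m) Q -> dim_le (@lep m) Q (height (@lep m) Q).+1.
Proof.
move=> HQ; set h := height (@lep m) Q.
have Hne : forall x, x \in Q -> 1 <= h by move=> x; apply: height1.
have mkE : forall x : TT m, x = mk m (tg x) (idx x).
  by move=> x; apply: eqTT; rewrite ?tg_mk ?idx_mk ?tgP ?idxP.
case: (boolP [exists t : 'I_m.+2, (mk m 0 t \in Q) && (mk m 2 t \in Q)]) => [Hex|Hno].
- have Pex : exists k, (k < m.+2) && (mk m 0 k \in Q) && (mk m 2 k \in Q).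
    by case/existsP: Hex => t ht; exists t; rewrite ltn_ord.
  case: (ex_minnP Pex) => p /andP [/andP [pN apQ] bpQ] pmin.
  case: (leqP 2 h) => h2.
  + apply: (realizer_of (c := fun i : 'I_h.+1 => if val i == 0 then 0 else if val i == 1 then 1 else p + i)).
    move=> x y xQ yQ nle.
    case: (boolP [&& tg x == 0, tg y == 2 & idx x == idx y]) => [/and3P [/eqP tx /eqP ty /eqP ixy]|nab].
    * have ex : x = mk m 0 (idx x) by rewrite {1}(mkE x) tx.
      have ey : y = mk m 2 (idx x) by rewrite {1}(mkE y) ty ixy.
      have pt : p <= idx x.
        apply: pmin => /=; rewrite idxP /=; by move: xQ yQ; rewrite {1}ex {1}ey => -> ->.
      have bound : idx x - p + 2 <= h.
        case: (ltngtP p (idx x)) pt => // [lt|eq] _; last by rewrite -eq subnn.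
        by apply: (chain_len HQ lt (idxP x)); move: xQ yQ; rewrite {1}ex {1}ey.
      have bi : idx x - p + 2 < h.+1 by [].
      exists (Ordinal bi) => /=.
      have -> : (idx x - p + 2 == 0) = false by lia.
      have -> : (idx x - p + 2 == 1) = false by lia.
      have -> : p + (idx x - p + 2) = (idx x).+2 by lia.
      by apply: coverx.
    * case/orP: (cover12 nle nab) => hh; first by exists ord0 => /=.
      have o1 : 1 < h.+1 by lia.
      by exists (Ordinal o1) => /=.
  + have sub : forall x, x \in Q -> (x == mk m 0 p) || (x == mk m 2 p).
      move=> x xQ; case: (boolP (x == mk m 0 p)) => //= n1; case: (boolP (x == mk m 2 p)) => //= n2.
      case/orP: (comp_ab x pN) => l.
        by have := height2 apQ xQ ltac:(by rewrite eq_sym n1) l; lia.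
      by have := height2 xQ bpQ n2 l; lia.
    have h1 : h = 1 by have := Hne _ apQ; lia.
    rewrite h1; apply: (realizer_of (c := fun i : 'I_2 => if val i == 0 then 0 else p.+2)).
    move=> x y xQ yQ nle.
    case/orP: (sub x xQ) => /eqP ex; case/orP: (sub y yQ) => /eqP ey; subst x y;
      rewrite ?lep_refl // in nle.
    * exists (Ordinal (isT : 1 < 2)) => /=.
      by have := @coverx m (mk m 0 p) (mk m 2 p); rewrite !tg_mk // !idx_mk //; apply.
    * exists ord0 => /=; rewrite /rk /r1 !tg_mk // !idx_mk //=; lia.
- apply: (realizer_of (c := fun i : 'I_h.+1 => if val i == 0 then 0 else 1)).
  move=> x y xQ yQ nle.
  have nab : ~~ [&& tg x == 0, tg y == 2 & idx x == idx y].
    apply/negP => /and3P [/eqP tx /eqP ty /eqP ixy]; move/negP: Hno; apply.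
    apply/existsP; exists (Ordinal (idxP x)) => /=.
    have ex : x = mk m 0 (idx x) by rewrite {1}(mkE x) tx.
    have ey : y = mk m 2 (idx x) by rewrite {1}(mkE y) ty ixy.
    by move: xQ yQ; rewrite {1}ex {1}ey => -> ->.
  case/orP: (cover12 nle nab) => hh; first by exists ord0 => /=.
  have o1 : 1 < h.+1 by have := Hne _ xQ.
  by exists (Ordinal o1) => /=.
Qed.

Theorem proposition9 (n : nat) (hn : 2 <= n) :
  exists (T : finType) (le : rel T),
    [/\ is_poset le,
        excludes_3_3 le,
        (* dim(P) >= n : no realizer of P with fewer than n linear extensions *)
        (forall d, dim_le le [set: T] d -> n <= d) &
        (forall Q : {set T}, convex le Q -> dim_le le Q (height le Q).+1)].
Proof.
case: n hn => [|[|m]] // _.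
exists (TT m), (@lep m); split.
- exact: poset.
- exact: excl.
- exact: dim_lb.
- exact: conv_dim.
Qed.
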